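(* For every $F\subset E_d(\square_m)$ and $j\in\mathbb N$, $$-\nabla\cdot\big(\mathbf a^F\nabla V_m(F,j)\big)=\nabla\cdot\mathbf W_m(F,j)\quad\text{at every point of }\mathrm{int}(\square_m),$$ where $\mathbf W_m(F,j)$ is the anti-symmetric vector field on oriented edges of $\square_m$ $$\mathbf W_m(F,j)=\sum_{e\in E_d(\square_m)\setminus F}(\mathbf a^e-\mathbf a)\Big(\nabla V_m(F,j-1)-\nabla V_m(F\cup\{e\},j-2)+\nabla V_m(F\cup\{e\},j-1)\Big)+\sum_{e\in F}(\mathbf a^e-\mathbf a)\Big(\nabla V_m(F\setminus\{e\},j)-\nabla V_m(F,j-1)\Big).$$
   Context: Bond configurations on $\mathbb Z^d$. $\square_m=\mathbb Z^d\cap(-3^m/2,3^m/2)^d$; $E_d(U)$ nearest-neighbour edges inside $U$; $\partial U=\{x\in U:\exists y\sim x,y\notin U\}$, $\mathrm{int}(U)=U\setminus\partial U$. $\nabla u(x,y)=u(y)-u(x)$; for a function $\mathbf b$ on edges and a vector field $W$, $(\mathbf bW)(x,y)=\mathbf b(\{x,y\})W(x,y)$; divergence $\nabla\cdot W(x)=\sum_{y\sim x}W(x,y)$. Fix $\xi\in\mathbb R^d$; for each configuration $\mathbf b$, $v_m(\mathbf b)$ is a fixed function on $\square_m$ with $v_m(\mathbf b)=\xi\cdot x$ on $\partial\square_m$ and $\nabla\cdot(\mathbf b\nabla v_m(\mathbf b))=0$ at every $x\in\mathrm{int}(\square_m)$. $\mathbf a^G(e)=\mathbf 1_{e\in G}+\mathbf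 a(e)\mathbf 1_{e\notin G}$, $\mathbf a^e=\mathbf a^{\{e\}}$; $D_Gf(\mathbf a)=\sum_{G'\subset G}(-1)^{|G\setminus G'|}f(\mathbf a^{G'})$. $V_m(F,j)=\sum_{G\subset E_d(\square_m)\setminus F,|G|=j}D_{F\cup G}v_m$ evaluated at $\mathbf a$, with $V_m(F,j)=0$ for $j<0$. *)

(* Defs.v *)
From mathcomp Require Import all_boot all_order all_algebra.
Set Implicit Arguments. Unset Strict Implicit. Unset Printing Implicit Defensive.
Import Order.TTheory GRing.Theory Num.Theory.
Local Open Scope ring_scope.

Definition zpt (d : nat) := {ffun 'I_d -> int}.

Definition evec (d : nat) (i : 'I_d) : zpt d := [ffun j => ((j == i) : nat)%:Z].

Definition nn (d : nat) (x y : zpt d) : bool := (\sum_i absz (x i - y i) == 1)%N.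

Definition inbox (m d : nat) (x : zpt d) : bool :=
  [forall i, ((absz (x i)).*2 < 3 ^ m)%N].

Definition onbound (m d : nat) (x : zpt d) : Prop :=
  inbox m x /\ exists y : zpt d, nn x y /\ ~~ inbox m y.

Definition interior (m d : nat) (x : zpt d) : Prop := inbox m x /\ ~ onbound m x.

(** Bond configurations: [b x i] is the value on the (unoriented) nearest
    neighbour edge {x, x + e_i}; every edge of Z^d is uniquely of this form. *)
Definition conf (R : Type) (d : nat) := zpt d -> 'I_d -> R.

Definition grad (R : zmodType) (d : nat) (u : zpt d -> R) : zpt d -> zpt d -> R :=
  fun x y => u y - u x.

(** (b W)(x,y) = b({x,y}) W(x,y)  (b({x,y}) read as 0 if x, y are not neighbours) *)
Definition mulbW (R : ringType) (d : nat) (b : conf R d) (W : zpt d -> zpt d -> R)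
  : zpt d -> zpt d -> R :=
  fun x y => (\sum_(i < d) (((y == x + evec i) : nat)%:R * b x i
                           + ((x == y + evec i) : nat)%:R * b y i)) * W x y.

Definition div (R : zmodType) (d : nat) (W : zpt d -> zpt d -> R) (x : zpt d) : R :=
  \sum_(i < d) (W x (x + evec i) + W x (x - evec i)).

(** Finite enumeration of the box: coordinates k_i in {0,..,3^m-1} shifted by
    (3^m-1)/2 give exactly the points of square_m. *)
Definition boxpt (m d : nat) := {ffun 'I_d -> 'I_(3 ^ m)}.
Definition bpos (m d : nat) (k : boxpt m d) : zpt d :=
  [ffun i => ((k i : nat)%:Z - ((3 ^ m).-1./2)%:Z)%R].

(** Edge (k, i) stands for the Z^d edge {bpos k, bpos k + e_i}. *)
Definition bedge (m d : nat) := (boxpt m d * 'I_d)%type.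

Definition Ebox (m d : nat) : {set bedge m d} :=
  [set e : bedge m d | inbox m (bpos e.1) && inbox m (bpos e.1 + evec e.2)].

Definition cfg_set (R : ringType) (m d : nat) (G : {set bedge m d}) (a : conf R d)
  : conf R d :=
  fun x i => if [exists e in G, (bpos e.1 == x) && (e.2 == i)] then 1 else a x i.

Definition DG (R : ringType) (m d : nat) (f : conf R d -> zpt d -> R)
  (G : {set bedge m d}) (a : conf R d) : zpt d -> R :=
  fun x => \sum_(G' : {set bedge m d} | G' \subset G)
             (-1) ^+ #|G :\: G'| * f (cfg_set G' a) x.

Definition Vm (R : ringType) (m d : nat) (v : conf R d -> zpt d -> R) (a : conf R d)
  (F : {set bedge m d}) (j : int) : zpt d -> R :=
  match j with
  | Posz n => fun x => \sum_(G : {set bedge m d} | (G \subset Ebox m d :\: F) && (#|G| == n))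
                         DG v (F :|: G) a x
  | Negz _ => fun _ => 0
  end.

Definition dconf (R : ringType) (m d : nat) (e : bedge m d) (a : conf R d) : conf R d :=
  fun x i => cfg_set [set e] a x i - a x i.

Definition Wm (R : ringType) (m d : nat) (v : conf R d -> zpt d -> R) (a : conf R d)
  (F : {set bedge m d}) (j : int) : zpt d -> zpt d -> R :=
  fun x y =>
    \sum_(e in Ebox m d :\: F)
      mulbW (dconf e a)
        (grad (fun z => Vm v a F (j - 1) z - Vm v a (F :|: [set e]) (j - 2) z
                        + Vm v a (F :|: [set e]) (j - 1) z)) x y
  + \sum_(e in F)
      mulbW (dconf e a)
        (grad (fun z => Vm v a (F :\ e) j z - Vm v a F (j - 1) z)) x y.

(* Main.v *)
Require Import Defs.
From mathcomp Require Import all_boot all_order all_algebra.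
From Stdlib Require Import FunctionalExtensionality.
From mathcomp Require Import ring.
Import Order.TTheory GRing.Theory Num.Theory.
Set Implicit Arguments. Unset Strict Implicit. Unset Printing Implicit Defensive.
Local Open Scope ring_scope.

Definition Lop (R : realFieldType) d (b : conf R d) (u : zpt d -> R) (x : zpt d) : R :=
  div (mulbW b (grad u)) x.

Lemma divD (R : realFieldType) d (W1 W2 : zpt d -> zpt d -> R) x :
  div (fun x y => W1 x y + W2 x y) x = div W1 x + div W2 x.
Proof. by rewrite /div -big_split /=; apply: eq_bigr => i _; rewrite addrACA. Qed.

Lemma div_sum (R : realFieldType) d (I : finType) (P : pred I) (W : I -> zpt d -> zpt d -> R) x :
  div (fun x y => \sum_(k | P k) W k x y) x = \sum_(k | P k) div (W k) x.
Proof. by rewrite /div exchange_big /=; apply: eq_bigr => i _; rewrite big_split. Qed.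

Lemma L_sum_u (R : realFieldType) d (I : Type) (r : seq I) (P : pred I) b (f : I -> zpt d -> R) x :
  Lop b (fun z => \sum_(k <- r | P k) f k z) x = \sum_(k <- r | P k) Lop b (f k) x.
Proof.
rewrite /Lop /div /mulbW /grad exchange_big /=; apply: eq_bigr => i _.
by rewrite -!sumrB !mulr_sumr -big_split.
Qed.

Lemma L_scal_u (R : realFieldType) d b (u : zpt d -> R) c x :
  Lop b (fun z => c * u z) x = c * Lop b u x.
Proof.
rewrite /Lop /div /mulbW /grad mulr_sumr; apply: eq_bigr => i _.
by ring.
Qed.

Lemma L_add_u (R : realFieldType) d b (u1 u2 : zpt d -> R) x :
  Lop b (fun z => u1 z + u2 z) x = Lop b u1 x + Lop b u2 x.
Proof.
rewrite /Lop /div /mulbW /grad -big_split; apply: eq_bigr => i _ /=.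
by ring.
Qed.

Lemma L_opp_u (R : realFieldType) d b (u : zpt d -> R) x :
  Lop b (fun z => - u z) x = - Lop b u x.
Proof. by rewrite -mulN1r -L_scal_u; congr Lop; apply: functional_extensionality => z; rewrite mulN1r. Qed.

Lemma L_sub_u (R : realFieldType) d b (u1 u2 : zpt d -> R) x :
  Lop b (fun z => u1 z - u2 z) x = Lop b u1 x - Lop b u2 x.
Proof. by rewrite L_add_u L_opp_u. Qed.

Lemma L_add_b (R : realFieldType) d (b1 b2 : conf R d) (u : zpt d -> R) x :
  Lop (fun y i => b1 y i + b2 y i) u x = Lop b1 u x + Lop b2 u x.
Proof.
rewrite /Lop /div /mulbW /grad -big_split; apply: eq_bigr => i _ /=.
rewrite addrACA -!mulrDl; congr (_ * _ + _ * _); rewrite -big_split; apply: eq_bigr => k _ /=;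
 rewrite !mulrDr addrACA //.
Qed.

Lemma L_sum_b (R : realFieldType) d (I : Type) (r : seq I) (P : pred I) (b : I -> conf R d) (u : zpt d -> R) x :
  Lop (fun y i => \sum_(k <- r | P k) b k y i) u x = \sum_(k <- r | P k) Lop (b k) u x.
Proof.
elim: r => [|k r IH].
  transitivity (Lop (fun _ _ => 0) u x).
    by congr Lop; apply: functional_extensionality => y; apply: functional_extensionality => i; rewrite big_nil.
  rewrite big_nil /Lop /div /mulbW /grad big1 // => i _.
  by rewrite !big1 ?mul0r ?addr0 // => k _; rewrite !mulr0 addr0.
rewrite big_cons; case Pk: (P k); last first.
  rewrite -IH; congr Lop; apply: functional_extensionality => y; apply: functional_extensionality => i.
  by rewrite big_cons Pk.
rewrite -IH -L_add_b; congr Lop; apply: functional_extensionality => y; apply: functional_extensionality => i.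
by rewrite big_cons Pk.
Qed.


Lemma bpos_inj m d : injective (@bpos m d).
Proof.
move=> k k' /ffunP H; apply/ffunP => i; have := H i; rewrite !ffunE => /addIr [] /val_inj //.
Qed.

Lemma cfg_decomp (R : realFieldType) m d (G : {set bedge m d}) (a : conf R d) :
  cfg_set G a = (fun y i => a y i + \sum_(e in G) dconf e a y i).
Proof.
apply: functional_extensionality => y; apply: functional_extensionality => i.
rewrite /dconf /cfg_set.
have E1 : forall e : bedge m d, [exists e' in [set e], (bpos e'.1 == y) && (e'.2 == i)] = (bpos e.1 == y) && (e.2 == i).
  move=> e; apply/existsP/idP => [[e' /andP[]]|]; first by rewrite inE => /eqP ->.
  by move=> H; exists e; rewrite inE eqxx.
under eq_bigr do rewrite E1.
case: existsP => [[e0 /andP[e0G /andP[/eqP h1 /eqP h2]]]|nE].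
  rewrite (bigD1 e0) //= h1 h2 !eqxx /= big1 ?addr0; first by ring.
  move=> e /andP[eG ne]; case: ifP; last by rewrite subrr.
  case/andP => /eqP; rewrite -h1 => /bpos_inj h3 /eqP; rewrite -h2 => h4.
  by case/eqP: ne; case: e e0 h3 h4 {eG e0G h1 h2} => ? ? [? ?] /= -> ->.
rewrite big1 ?addr0 // => e eG; case: ifP; last by rewrite subrr.
by move=> H; case: nE; exists e; rewrite eG.
Qed.

Lemma cfg_U1 (R : realFieldType) m d (e : bedge m d) (G : {set bedge m d}) (a : conf R d) :
  cfg_set (e |: G) a = cfg_set [set e] (cfg_set G a).
Proof.
apply: functional_extensionality => y; apply: functional_extensionality => i.
rewrite /cfg_set.
case: existsP => [[e' /andP[]]|nE].
  rewrite !inE => /orP[/eqP -> H|e'G H].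
    by case: existsP => // -[]; exists e; rewrite inE eqxx.
  case: existsP => // _; case: existsP => // -[]; exists e'; rewrite e'G //.
case: existsP => [[e' /andP[]]|_]; first by rewrite inE => /eqP -> H; case: nE; exists e; rewrite !inE eqxx.
case: existsP => // [[e' /andP[e'G H]]]; case: nE; exists e'; rewrite !inE e'G orbT //.
Qed.

Lemma cfg_set0 (R : realFieldType) m d (a : conf R d) : cfg_set (set0 : {set bedge m d}) a = a.
Proof.
apply: functional_extensionality => y; apply: functional_extensionality => i.
by rewrite /cfg_set; case: existsP => // -[e]; rewrite inE.
Qed.

Lemma Omega_cfg (R : realFieldType) m d (Omega : conf R d -> Prop) (a : conf R d)
  (HOmega : forall (b : conf R d) (e : bedge m d), Omega b -> Omega (cfg_set [set e] b))
  (Ha : Omega a) (G : {set bedge m d}) : Omega (cfg_set G a).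
Proof.
move: {2}#|G| (erefl #|G|) => n; elim: n G => [|n IH] G HG.
  by move/eqP: HG; rewrite cards_eq0 => /eqP ->; rewrite cfg_set0.
have : (0 < #|G|)%N by rewrite HG.
rewrite card_gt0 => /set0Pn [e eG].
rewrite -(setD1K eG) cfg_U1; apply: HOmega; apply: IH.
by move: HG; rewrite (cardsD1 e) eG add1n => -[].
Qed.


Section Comb.
Context (R : realFieldType) (T : finType).

Lemma C1 (S : {set T}) (e : T) (n : nat) (f : {set T} -> R) :
  \sum_(G : {set T} | (G \subset S) && (#|G| == n)) f G =
  \sum_(G : {set T} | (G \subset S) && (#|G| == n) && (e \in G)) f G +
  \sum_(G : {set T} | (G \subset S :\ e) && (#|G| == n)) f G.
Proof.
rewrite (bigID [pred G : {set T} | e \in G]) /=; congr (_ + _); apply: eq_bigl => G.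
by rewrite subsetD1; case: (G \subset S); case: (#|G| == n); case: (e \in G).
Qed.

Lemma C3 (S : {set T}) (e : T) (f : {set T} -> R) :
  \sum_(G : {set T} | (G \subset S) && (#|G| == 0%N) && (e \in G)) f G = 0.
Proof.
rewrite big1 // => G /andP[/andP[_ /eqP/cards0_eq ->]]; by rewrite inE.
Qed.

Lemma C2 (S : {set T}) (e : T) (n : nat) (f : {set T} -> R) : e \in S ->
  \sum_(G : {set T} | (G \subset S) && (#|G| == n.+1) && (e \in G)) f G =
  \sum_(G : {set T} | (G \subset S :\ e) && (#|G| == n)) f (e |: G).
Proof.
move=> eS.
rewrite (reindex_onto (fun G => e |: G) (fun G => G :\ e)); last first.
  by move=> G /andP[_ eG]; rewrite setD1K.
apply: eq_bigl => G; rewrite subsetD1 setU11 andbT subUset sub1set eS /= cardsU1.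
case eG: (e \in G) => /=; last by rewrite setU1K ?eG // eqxx add1n eqSS !andbT.
rewrite andbF /=; apply/negbTE; rewrite negb_and; apply/orP; right; apply/eqP => H.
by move: eG; rewrite -H !inE eqxx.
Qed.

Lemma sign_split (H : {set T}) (e : T) (f : {set T} -> R) : e \in H ->
  \sum_(G : {set T} | (G \subset H) && (e \in G)) (-1) ^+ #|H :\: G| * f G =
  \sum_(G : {set T} | G \subset H) (-1) ^+ #|H :\: G| * f G +
  \sum_(G : {set T} | G \subset H :\ e) (-1) ^+ #|(H :\ e) :\: G| * f G.
Proof.
move=> eH; rewrite [in RHS](bigID [pred G : {set T} | e \in G]) /=.
rewrite -addrA [X in _ = _ + X](_ : _ = 0) ?addr0 //.
rewrite [X in _ + X = 0](eq_bigl (fun G : {set T} => (G \subset H) && (e \notin G))); last first.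
  by move=> G; rewrite subsetD1.
rewrite -big_split /= big1 // => G /andP[GH eG].
rewrite (cardsD1 e (H :\: G)) !inE eH (negbTE eG) /= add1n exprS.
have -> : (H :\: G) :\ e = H :\ e :\: G.
  by apply/setP => y; rewrite !inE; bool_congr.
by rewrite mulN1r mulNr addNr.
Qed.
End Comb.


Lemma LaD (R : realFieldType) (d m : nat)
  (Omega : conf R d -> Prop) (v : conf R d -> zpt d -> R) (a : conf R d)
  (HOmega : forall (b : conf R d) (e : bedge m d), Omega b -> Omega (cfg_set [set e] b))
  (Ha : Omega a)
  (Hharm : forall b, Omega b -> forall x : zpt d, interior m x ->
           div (mulbW b (grad (v b))) x = 0)
  (H : {set bedge m d}) (x : zpt d) (Hx : interior m x) :
  Lop a (DG v H a) x =
  - \sum_(e in H) Lop (dconf e a) (fun z => DG v H a z + DG v (H :\ e) a z) x.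
Proof.
have harm : forall G : {set bedge m d}, Lop a (v (cfg_set G a)) x =
   - \sum_(e in G) Lop (dconf e a) (v (cfg_set G a)) x.
  move=> G; have h : Lop (cfg_set G a) (v (cfg_set G a)) x = 0.
    exact: Hharm (Omega_cfg HOmega Ha G) x Hx.
  move: h; rewrite [X in Lop X _ _]cfg_decomp L_add_b L_sum_b => /eqP.
  by rewrite addr_eq0 => /eqP.
rewrite {1}/DG L_sum_u.
under eq_bigr => G _ do rewrite L_scal_u harm mulrN mulr_sumr.
rewrite sumrN; congr (- _).
rewrite (exchange_big_dep (fun e => e \in H)) /=; last first.
  by move=> G e GH eG; exact: (subsetP GH e eG).
apply: eq_bigr => e eH.
transitivity (Lop (dconf e a) (fun z => \sum_(G : {set bedge m d} | (G \subset H) && (e \in G))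
   (-1) ^+ #|H :\: G| * v (cfg_set G a) z) x).
  by rewrite L_sum_u; apply: eq_bigr => G _; rewrite L_scal_u.
congr Lop; apply: functional_extensionality => z.
by rewrite /DG sign_split.
Qed.


Lemma int1 (n : nat) : (Posz n.+1 - 1 = Posz n)%R.
Proof. by rewrite -addn1 PoszD addrK. Qed.
Lemma int2 (n : nat) : (Posz n.+2 - 2 = Posz n)%R.
Proof. by rewrite -addn2 PoszD addrK. Qed.
Lemma int01 : (Posz 0 - 1 = Negz 0)%R. Proof. by []. Qed.
Lemma int02 : (Posz 0 - 2 = Negz 1)%R. Proof. by []. Qed.
Lemma int12 : (Posz 1 - 2 = Negz 0)%R. Proof. by []. Qed.

Lemma Hshift (R : realFieldType) (d m : nat) (v : conf R d -> zpt d -> R) (a : conf R d)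
  (F : {set bedge m d}) (e : bedge m d) (k : nat) z :
  \sum_(G : {set bedge m d} | (G \subset (Ebox m d :\: F) :\ e) && (#|G| == k))
     DG v (F :|: (e |: G)) a z = Vm v a (F :|: [set e]) k z.
Proof. by rewrite /= setDDl; apply: eq_bigr => G _; rewrite setUA. Qed.

Lemma P1 (R : realFieldType) (d m : nat) (v : conf R d -> zpt d -> R) (a : conf R d)
  (F : {set bedge m d}) (e : bedge m d) (j : nat) z : e \in Ebox m d :\: F ->
  \sum_(G : {set bedge m d} | (G \subset Ebox m d :\: F) && (#|G| == j) && (e \in G))
     (DG v (F :|: G) a z + DG v ((F :|: G) :\ e) a z)
  = Vm v a F (Posz j - 1) z - Vm v a (F :|: [set e]) (Posz j - 2) z
    + Vm v a (F :|: [set e]) (Posz j - 1) z.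
Proof.
move=> eS; have eF : e \notin F by move: eS; rewrite inE => /andP[].
case: j => [|n].
  by rewrite C3 int01 int02 /= subrr addr0.
rewrite C2 // int1.
rewrite (eq_bigr (fun G => DG v (F :|: (e |: G)) a z + DG v (F :|: G) a z)); last first.
  move=> G /andP[]; rewrite subsetD1 => /andP[_ eG] _; congr (_ + DG v _ a z).
  by apply/setP => y; rewrite !inE; case: (eqVneq y e) => [->|] //=; rewrite (negbTE eF) (negbTE eG).
rewrite big_split Hshift.
change (Vm v a F n z) with (\sum_(G : {set bedge m d} | (G \subset Ebox m d :\: F) && (#|G| == n))
     DG v (F :|: G) a z).
rewrite [in RHS](C1 _ e); case: n => [|n].
  by rewrite C3 int12 /= add0r subr0 addrC.
rewrite C2 // int2 Hshift -/(Vm v a (F :|: [set e]) n z).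
by rewrite [Vm _ _ _ n z + _]addrC addrK [in RHS]addrC.
Qed.

Lemma P2 (R : realFieldType) (d m : nat) (v : conf R d -> zpt d -> R) (a : conf R d)
  (F : {set bedge m d}) (e : bedge m d) (j : nat) z : e \in F -> e \in Ebox m d ->
  \sum_(G : {set bedge m d} | (G \subset Ebox m d :\: F) && (#|G| == j))
     (DG v (F :|: G) a z + DG v ((F :|: G) :\ e) a z) - Vm v a F j z
  = Vm v a (F :\ e) j z - Vm v a F (Posz j - 1) z.
Proof.
move=> eF eE.
rewrite big_split.
change (Vm v a F j z) with (\sum_(G : {set bedge m d} | (G \subset Ebox m d :\: F) && (#|G| == j))
     DG v (F :|: G) a z).
rewrite -addrA addrC addrNK.
change (Vm v a (F :\ e) j z) with (\sum_(G : {set bedge m d} | (G \subset Ebox m d :\: (F :\ e)) && (#|G| == j))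
     DG v ((F :\ e) :|: G) a z).
have eS : e \in Ebox m d :\: (F :\ e) by rewrite in_setD in_setD1 eqxx eE.
have SE : (Ebox m d :\: (F :\ e)) :\ e = Ebox m d :\: F.
  by apply/setP => y; rewrite !inE; case: (eqVneq y e) => [->|] //=; rewrite eF.
rewrite [in RHS](C1 _ e) SE.
rewrite [X in _ = _ + X - _](eq_bigr (fun G => DG v ((F :|: G) :\ e) a z)); last first.
  move=> G /andP[GS _]; have eG : e \notin G.
    by apply/negP => /(subsetP GS); rewrite inE eF.
  by congr (DG v _ a z); apply/setP => y; rewrite !inE; case: (eqVneq y e) => [->|] //=; rewrite (negbTE eG).
case: j => [|n].
  by rewrite C3 int01 /= add0r subr0.
rewrite C2 // int1 SE.
rewrite [X in _ = X + _ - _](eq_bigr (fun G => DG v (F :|: G) a z)); last first.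
  move=> G _; congr (DG v _ a z); apply/setP => y; rewrite !inE; case: (eqVneq y e) => [->|] //=.
  by rewrite eF.
by rewrite -/(Vm v a F n z) addrAC subrr add0r.
Qed.


Lemma mainL (R : realFieldType) (d m : nat)
  (Omega : conf R d -> Prop) (v : conf R d -> zpt d -> R) (a : conf R d)
  (HOmega : forall (b : conf R d) (e : bedge m d), Omega b -> Omega (cfg_set [set e] b))
  (Ha : Omega a)
  (Hharm : forall b, Omega b -> forall x : zpt d, interior m x ->
           div (mulbW b (grad (v b))) x = 0)
  (F : {set bedge m d}) (HF : F \subset Ebox m d) (j : nat) (x : zpt d) (Hx : interior m x) :
  - Lop (cfg_set F a) (Vm v a F j) x =
  \sum_(e in Ebox m d :\: F)
      Lop (dconf e a) (fun z => Vm v a F (Posz j - 1) z - Vm v a (F :|: [set e]) (Posz j - 2) z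
                        + Vm v a (F :|: [set e]) (Posz j - 1) z) x
  + \sum_(e in F)
      Lop (dconf e a) (fun z => Vm v a (F :\ e) j z - Vm v a F (Posz j - 1) z) x.
Proof.
set T := fun (G : {set bedge m d}) (e : bedge m d) =>
  Lop (dconf e a) (fun z => DG v (F :|: G) a z + DG v ((F :|: G) :\ e) a z) x.
have LaV : - Lop a (Vm v a F j) x =
   \sum_(G : {set bedge m d} | (G \subset Ebox m d :\: F) && (#|G| == j))
     (\sum_(e in F) T G e + \sum_(e in G) T G e).
  rewrite [Vm v a F j]/Vm L_sum_u -sumrN; apply: eq_bigr => G /andP[GS _].
  rewrite (LaD HOmega Ha Hharm _ Hx) opprK.
  rewrite (eq_bigl [predU F & G]); last by move=> e; rewrite !inE.
  rewrite bigU // disjoint_sym disjoint_subset; apply/subsetP => e eG.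
  by move: (subsetP GS e eG); rewrite in_setD => /andP[].
rewrite [X in Lop X _ _]cfg_decomp L_add_b L_sum_b opprD LaV big_split /=.
rewrite [X in _ + X - _](exchange_big_dep (fun e => e \in Ebox m d :\: F)) /=; last first.
  by move=> G e /andP[GS _] eG; apply: (subsetP GS).
rewrite [X in X + _ - _]exchange_big /= addrAC addrC; congr (_ + _).
  apply: eq_bigr => e eS.
  transitivity (Lop (dconf e a) (fun z =>
     \sum_(G : {set bedge m d} | (G \subset Ebox m d :\: F) && (#|G| == j) && (e \in G))
     (DG v (F :|: G) a z + DG v ((F :|: G) :\ e) a z)) x).
    by rewrite L_sum_u.
  by congr Lop; apply: functional_extensionality => z; apply: P1.
rewrite -sumrB; apply: eq_bigr => e eF.
transitivity (Lop (dconf e a) (fun z =>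
     \sum_(G : {set bedge m d} | (G \subset Ebox m d :\: F) && (#|G| == j))
     (DG v (F :|: G) a z + DG v ((F :|: G) :\ e) a z) - Vm v a F j z) x).
  by rewrite L_sub_u [X in _ = X - _]L_sum_u.
congr Lop; apply: functional_extensionality => z; apply: P2 => //.
exact: (subsetP HF).
Qed.


Theorem lemma3p5 (R : realFieldType) (d m : nat) (xi : 'I_d -> R)
  (Omega : conf R d -> Prop) (v : conf R d -> zpt d -> R) (a : conf R d)
  (HOmega : forall (b : conf R d) (e : bedge m d), Omega b -> Omega (cfg_set [set e] b))
  (Ha : Omega a)
  (Hbd : forall b, Omega b -> forall x : zpt d, onbound m x ->
           v b x = \sum_(i < d) xi i * (x i)%:~R)
  (Hharm : forall b, Omega b -> forall x : zpt d, interior m x ->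
           div (mulbW b (grad (v b))) x = 0)
  (F : {set bedge m d}) (HF : F \subset Ebox m d) (j : nat) :
  forall x : zpt d, interior m x ->
    - div (mulbW (cfg_set F a) (grad (Vm v a F j))) x = div (Wm v a F j) x.
Proof.
move=> x Hx; rewrite /Wm divD !div_sum.
exact: (mainL HOmega Ha Hharm HF j Hx).
Qed.
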